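(* Let $G$ be one of $\mathrm{GL}_n$, $\mathrm{SO}_{2n+1}$, $\mathrm{SO}_{2n}$, $\mathrm{Sp}_{2n}$ (excluding $\mathrm{SO}_{2n+1}$ when $p=2$) with natural module $V$, let $P$ be a proper parabolic subgroup with unipotent radical $Q$ and natural flag $0=W_0<W_1<\dots<W_\ell=V$. Let $g\in Q$, $r\ge1$, and let $V_r$ be a subspace spanned by $r$ Jordan chains of $g$ belonging to $r$ distinct Jordan blocks. Then $\dim V_r\le\sum_{i=1}^\ell\min\{r,\dim W_i/W_{i-1}\}$, with equality if and only if $\dim(V_r\cap W_j)=\sum_{i=1}^j\min\{r,\dim W_i/W_{i-1}\}$ for all $j\ge1$. In particular, if $\lambda_1(g)\ge\lambda_2(g)\ge\cdots$ are the Jordan block sizes of $g$, then $\sum_{i=1}^r\lambda_i(g)\le\sum_{i=1}^\ell\min\{r,\dim W_i/W_{i-1}\}$ for all $r\ge1$.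
   Context: Setup: a subspace $W$ of the natural module is totally singular if the quadratic form (hence the bilinear form $\beta$) vanishes on it; for $\mathrm{GL}_n$ every subspace counts as totally singular. A flag $W_0\le\dots\le W_\ell$ is totally singular if each $W_i$ is totally singular or equals $W^\perp$ for some totally singular $W$. Write a Levi factor of $P$ as $\mathrm{GL}_{n_1}\cdots\mathrm{GL}_{n_s}\mathrm{Cl}_m$ ($m\ge 0$; $\mathrm{Cl}_m$ a classical group of the same type as $G$ of rank $m$, absent for $\mathrm{GL}_n$ where $m=0$). A natural flag for $P$ is a totally singular flag of length $\ell$ whose stabilizer is $P$, where $\ell=s$ if $G=\mathrm{GL}_n$, $\ell=2s$ if $m=0$ and $G\in\{\mathrm{SO}_{2n},\mathrm{Sp}_{2n}\}$, and $\ell=2s+1$ if $m\ge1$ or $G=\mathrm{SO}_{2n+1}$. The unipotent radical $Q$ is the set of elements of $P$ acting trivially on every factor $W_i/W_{i-1}$. A Jordan chain of length $x$ for $g$ is $v_1,\dots,v_x$ with $(g-1)v_1=0$, $(g-1)v_i=v_{i-1}$. *)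

(* Defs.v *)
From HB Require Import structures.
From mathcomp Require Import all_boot all_order all_algebra.
Set Implicit Arguments. Unset Strict Implicit. Unset Printing Implicit Defensive.
Import GRing.Theory.
Local Open Scope ring_scope.

(* Vectors of the natural module V = F^N are row vectors 'rV[F]_N; a linear
   map g : 'M_N acts on the right (v |-> v *m g).  Subspaces of V are
   represented by matrices through their row space (mxalgebra, %MS). *)

Inductive ctype := TGL | TSO_odd | TSO_even | TSp.

Section Classical.
Variables (F : fieldType) (N : nat).

Definition qf (A : 'M[F]_N) (v : 'rV[F]_N) : F := (v *m A *m v^T) 0 0.

(* Gram matrix of the bilinear form beta(u,v) = u B v^T:
   for Sp it is A itself, for SO it is the polar form A + A^T of Q,
   for GL there is no form. *)
Definition bform (t : ctype) (A : 'M[F]_N) : 'M[F]_N :=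
  match t with
  | TGL => 0
  | TSp => A
  | _ => A + A^T
  end.

Definition classical_form (t : ctype) (A : 'M[F]_N) : Prop :=
  match t with
  | TGL => (0 < N)%N
  | TSp => ~~ odd N /\ A^T = - A /\ (forall i, A i i = 0) /\ A \in unitmx
  | TSO_even => ~~ odd N /\ (A + A^T) \in unitmx
  | TSO_odd => odd N /\ ~~ (2%N \in [pchar F]) /\ (A + A^T) \in unitmx
  end.

Definition in_G (t : ctype) (A : 'M[F]_N) (g : 'M[F]_N) : Prop :=
  match t with
  | TGL => g \in unitmx
  | TSp => g *m A *m g^T = A
  | _ => (forall v, qf A (v *m g) = qf A v) /\ \det g = 1
  end.

Definition totally_singular (t : ctype) (A : 'M[F]_N) (W : 'M[F]_N) : Prop :=
  match t with
  | TGL => True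
  | TSp => W *m A *m W^T = 0
  | _ => forall v : 'rV[F]_N, (v <= W)%MS -> qf A v = 0
  end.

Definition perp (t : ctype) (A : 'M[F]_N) (W : 'M[F]_N) : 'M[F]_N :=
  kermx ((W *m bform t A)^T).

(* (W_0, ..., W_l) is the natural flag of a proper parabolic subgroup P of G:
   0 = W_0 < W_1 < ... < W_l = V, and for the form types the flag has the shape
   0 < W_1 < ... < W_s (<) W_s^perp < ... < W_1^perp < V with W_1,..,W_s
   totally singular, l = 2s (W_s = W_s^perp) or l = 2s+1; properness means
   l >= 2 for GL and s >= 1 otherwise.  P is the stabilizer in G of this flag. *)
Definition proper_natural_flag (t : ctype) (A : 'M[F]_N) (l : nat)
    (W : nat -> 'M[F]_N) : Prop :=
  (W 0%N == (0 : 'M[F]_N))%MS /\ (W l == 1%:M)%MS /\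
  (forall i, (i < l)%N -> (W i < W i.+1)%MS) /\
  match t with
  | TGL => (2 <= l)%N
  | _ => exists s, (1 <= s)%N /\ (l = s.*2 \/ l = s.*2.+1) /\
           (forall i, (i <= s)%N -> totally_singular t A (W i)) /\
           (forall i, (i <= s)%N -> (W (l - i)%N == perp t A (W i))%MS)
  end.

Definition in_parabolic (t : ctype) (A : 'M[F]_N) (l : nat)
    (W : nat -> 'M[F]_N) (g : 'M[F]_N) : Prop :=
  in_G t A g /\ (forall i, (i <= l)%N -> (W i *m g == W i)%MS).

Definition in_unipotent_radical (t : ctype) (A : 'M[F]_N) (l : nat)
    (W : nat -> 'M[F]_N) (g : 'M[F]_N) : Prop :=
  in_parabolic t A l W g /\
  (forall i, (1 <= i <= l)%N -> (W i *m (g - 1%:M) <= W i.-1)%MS).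

Definition span_mx (s : seq 'rV[F]_N) : 'M[F]_(size s, N) :=
  \matrix_(i < size s) nth 0 s i.

Definition jordan_chain (g : 'M[F]_N) (c : seq 'rV[F]_N) : Prop :=
  forall i, (i < size c)%N ->
    nth 0 c i *m (g - 1%:M) = (if i is j.+1 then nth 0 c j else 0).

(* A Jordan decomposition of V for g: a list of (nonempty) Jordan chains whose
   concatenation is a basis of V; the Jordan blocks of g are the spans of
   these chains and the Jordan block sizes are their lengths. *)
Definition jordan_basis (g : 'M[F]_N) (bs : seq (seq 'rV[F]_N)) : Prop :=
  (forall b, b \in bs -> jordan_chain g b /\ (0 < size b)%N) /\
  row_free (span_mx (flatten bs)) /\ row_full (span_mx (flatten bs)).

(* Jordan block sizes lambda_1 >= lambda_2 >= ... (padded by zeros). *)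
Definition jordan_sizes (bs : seq (seq 'rV[F]_N)) : seq nat :=
  sort geq (map size bs).

Definition flag_bound (W : nat -> 'M[F]_N) (r j : nat) : nat :=
  (\sum_(1 <= i < j.+1) minn r (\rank (W i) - \rank (W i.-1)))%N.

End Classical.

(* Main.v *)
Require Import Defs.
From HB Require Import structures.
From mathcomp Require Import all_boot all_order all_algebra.
From mathcomp Require Import zify.
Set Implicit Arguments. Unset Strict Implicit. Unset Printing Implicit Defensive.
Import GRing.Theory.
Local Open Scope ring_scope.

Section Aux.
Variables (F : fieldType) (N : nat).
Implicit Types (s : seq 'rV[F]_N).

Lemma span_mem s x : x \in s -> (x <= span_mx s)%MS.
Proof.
move=> xs; have lt : (index x s < size s)%N by rewrite index_mem.
have -> : x = row (Ordinal lt) (span_mx s) by rewrite rowK /= nth_index.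
exact: row_sub.
Qed.

Lemma span_subP s m (M : 'M[F]_(m, N)) :
  (forall x, x \in s -> (x <= M)%MS) -> (span_mx s <= M)%MS.
Proof.
move=> H; apply/row_subP => i; rewrite rowK; apply: H; exact: mem_nth.
Qed.

Lemma chain_inv (g : 'M[F]_N) s : jordan_chain g s ->
  (span_mx s *m (g - 1%:M) <= span_mx s)%MS.
Proof.
move=> hc; apply/row_subP => i; rewrite row_mul rowK hc //.
case: (nat_of_ord i) (ltn_ord i) => [|j] lt; first exact: sub0mx.
by apply: span_mem; apply: mem_nth; apply: ltnW.
Qed.

Lemma chain_last (g : 'M[F]_N) s : jordan_chain g s ->
  (span_mx s <= span_mx s *m (g - 1%:M) + nth 0 s (size s).-1)%MS.
Proof.
move=> hc; apply/row_subP => i; rewrite rowK.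
have [lt|ge] := ltnP i.+1 (size s).
  apply: submx_trans (addsmxSl _ _).
  have <- : row (Ordinal lt) (span_mx s) *m (g - 1%:M) = nth 0 s i.
    by rewrite rowK hc.
  by rewrite -row_mul row_sub.
have -> : nat_of_ord i = (size s).-1.
  by have := ltn_ord i; move: ge; lia.
exact: addsmxSr.
Qed.
End Aux.

Section Aux2.
Variables (F : fieldType) (N : nat).

Lemma sum_chains (g : 'M[F]_N) m (c : 'I_m -> seq 'rV[F]_N) :
  (forall k, jordan_chain g (c k)) ->
  let V := (\sum_(k < m) <<span_mx (c k)>>)%MS in
  (V *m (g - 1%:M) <= V)%MS /\ (\rank V <= \rank (V *m (g - 1%:M)) + m)%N.
Proof.
move=> hc V; set u := g - 1%:M.
have SV k : (span_mx (c k) <= V)%MS.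
  by apply: (sumsmx_sup k) => //; rewrite genmxE.
split.
  rewrite /V.
  rewrite (sumsmxMr _ _ u); apply/sumsmx_subP => k _.
  rewrite (eqmxMr u (genmxE _)).
  exact: submx_trans (chain_inv (hc k)) (SV k).
pose L := \matrix_(k < m) nth 0 (c k) (size (c k)).-1.
have H : (V <= V *m u + L)%MS.
  apply/sumsmx_subP => k _; rewrite genmxE.
  apply: submx_trans (chain_last (hc k)) _.
  apply: addsmxS; first exact: submxMr.
  by have := row_sub k L; rewrite rowK.
apply: leq_trans (mxrankS H) _.
apply: leq_trans (mxrank_adds_leqif _ _) _.
by rewrite leq_add2l rank_leq_row.
Qed.
End Aux2.

Section Core.
Variables (F : fieldType) (N : nat) (W : nat -> 'M[F]_N) (l r : nat) (u V : 'M[F]_N).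
Hypotheses (hW0 : (W 0 == (0 : 'M[F]_N))%MS) (hWl : (W l == (1%:M : 'M[F]_N))%MS)
  (hmono : forall i, (i < l)%N -> (W i <= W i.+1)%MS)
  (hu : forall i, (1 <= i <= l)%N -> (W i *m u <= W i.-1)%MS)
  (hl : (0 < l)%N) (hV : (V *m u <= V)%MS) (hr : (\rank V <= \rank (V *m u) + r)%N).

Let d j := \rank (V :&: W j)%MS.

Lemma core_step j : (1 <= j <= l)%N ->
  (d j <= d j.-1 + minn r (\rank (W j) - \rank (W j.-1)))%N.
Proof.
move=> /andP[j1 jl]; rewrite /d.
have mj : (W j.-1 <= W j)%MS by have := hmono (i := j.-1); case: j j1 jl => // j _ jl; apply; exact: jl.
set Fj := (V :&: W j)%MS.
have a : (\rank Fj <= \rank (V :&: W j.-1) + r)%N.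
  have e1 := mxrank_mul_ker Fj u; have e2 := mxrank_mul_ker V u.
  have s1 : (\rank (Fj :&: kermx u) <= \rank (V :&: kermx u))%N.
    by apply: mxrankS; apply: capmxS => //; exact: capmxSl.
  have s2 : (\rank (Fj *m u) <= \rank (V :&: W j.-1))%N.
    apply: mxrankS; rewrite sub_capmx; apply/andP; split.
      by apply: submx_trans hV; apply: submxMr; exact: capmxSl.
    by apply: submx_trans (hu (i:=j) _); [apply: submxMr; exact: capmxSr | rewrite j1 jl].
  lia.
have b : (\rank Fj + \rank (W j.-1) <= \rank (W j) + \rank (V :&: W j.-1))%N.
  have e := mxrank_sum_cap Fj (W j.-1).
  have s1 : (\rank (Fj + W j.-1) <= \rank (W j))%N.
    by apply: mxrankS; rewrite addsmx_sub mj capmxSr.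
  have s2 : \rank (Fj :&: W j.-1) = \rank (V :&: W j.-1).
    apply: eqmx_rank; apply/andP; split.
      by apply: capmxS => //; exact: capmxSl.
    rewrite !sub_capmx capmxSl capmxSr /= andbT.
    exact: submx_trans (capmxSr _ _) mj.
  lia.
have c : (\rank (W j.-1) <= \rank (W j))%N by exact: mxrankS.
lia.
Qed.

Lemma core_ind j k : (j <= k <= l)%N ->
  (d k + flag_bound W r j <= d j + flag_bound W r k)%N.
Proof.
move=> /andP[]; elim: k => [|k IH]; first by rewrite leqn0 => /eqP ->.
rewrite leq_eqVlt => /orP[/eqP -> //|jk kl].
have A := IH jk (ltnW kl).
have B := core_step (j := k.+1); rewrite /= kl in B; have {}B := B isT.
rewrite /flag_bound [X in (_ <= _ + X)%N]big_nat_recr //=; rewrite /flag_bound in A.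
rewrite /d in A B *; lia.
Qed.

Lemma d0 : d 0 = 0%N.
Proof. apply/eqP; rewrite -leqn0; apply: leq_trans (mxrankS (capmxSr V (W 0))) _; by rewrite (eqmx_rank hW0) mxrank0. Qed.

Lemma dl : d l = \rank V.
Proof.
apply: eqmx_rank; apply/andP; split; first exact: capmxSl.
by rewrite sub_capmx submx_refl /= (eqmxP hWl) submx1.
Qed.

Lemma core : (\rank V <= flag_bound W r l)%N /\
  (\rank V = flag_bound W r l <->
     (forall j, (1 <= j <= l)%N -> \rank (V :&: W j)%MS = flag_bound W r j)).
Proof.
have fb0 : flag_bound W r 0 = 0%N by rewrite /flag_bound big_geq.
have le j : (j <= l)%N -> (d j <= flag_bound W r j)%N.
  by move=> jl; have := core_ind (j := 0) (k := j); rewrite jl d0 fb0 /=; lia.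
split; first by rewrite -dl; exact: le.
split.
  move=> E j /andP[j1 jl]; have := core_ind (j := j) (k := l); rewrite jl leqnn.
  have := le j jl; rewrite dl E /d; lia.
move=> H; rewrite -dl; apply: H.
by rewrite hl leqnn.
Qed.
End Core.

Lemma sumnth r (s : seq nat) : (\sum_(i < r) nth 0%N s i)%N = sumn (take r s).
Proof.
elim: r s => [|r IH] [|x s] /=; rewrite ?big_ord0 // big_ord_recl /=.
  by rewrite big1 // => i _; rewrite nth_nil.
by rewrite IH.
Qed.

Theorem mainTheorem6 (F : closedFieldType) (t : ctype) (N : nat)
    (A : 'M[F]_N) (hG : classical_form t A)
    (l : nat) (W : nat -> 'M[F]_N) (hW : proper_natural_flag t A l W)
    (g : 'M[F]_N) (hg : in_unipotent_radical t A l W g)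
    (bs : seq (seq 'rV[F]_N)) (hbs : jordan_basis g bs) :
  (forall (r : nat) (c : 'I_r -> seq 'rV[F]_N) (blk : 'I_r -> nat),
     (1 <= r)%N ->
     injective blk ->
     (forall k, (blk k < size bs)%N) ->
     (forall k, jordan_chain g (c k)) ->
     (forall k, (span_mx (c k) <= span_mx (nth [::] bs (blk k)))%MS) ->
     let Vr := (\sum_(k < r) <<span_mx (c k)>>)%MS in
     (\rank Vr <= flag_bound W r l)%N /\
     (\rank Vr = flag_bound W r l <->
        (forall j, (1 <= j <= l)%N ->
           \rank (Vr :&: W j)%MS = flag_bound W r j))) /\
  (forall r : nat, (1 <= r)%N ->
     (\sum_(i < r) nth 0 (jordan_sizes bs) i <= flag_bound W r l)%N).
Proof.
have [hW0 [hWl [hlt hshape]]] := hW.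
have hmono i : (i < l)%N -> (W i <= W i.+1)%MS by move=> il; apply: ltmxW; exact: hlt.
have hl1 : (0 < l)%N.
  by case: t hshape {hG hW hg} => [|||] H //; try (by apply: leq_trans H);
     case: H => s [s1 [[->|->] _]] //; rewrite -addnn; lia.
have hu := hg.2.
split.
  move=> r c blk r1 _ _ hc _ Vr.
  have [hV hr] := sum_chains hc.
  exact: (core hW0 hWl hmono hu hl1 hV hr).
move=> r r1.
set bs' := sort (relpre size geq) bs.
have pb : perm_eq bs' bs by rewrite perm_sort.
rewrite /jordan_sizes sort_map sumnth -map_take -/bs'.
set X := take r bs'; set Y := drop r bs'.
have -> : sumn [seq size i | i <- X] = size (flatten X) by rewrite size_flatten.
have [hb [hfree _]] := hbs.
have hcX : forall k : 'I_(size X), jordan_chain g (nth [::] X k).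
  move=> k; have : nth [::] X k \in bs.
    by rewrite -(perm_mem pb) (mem_take (mem_nth _ (ltn_ord k))).
  by case/hb.
have [hV hr] := sum_chains hcX.
set V := (\sum_(k < size X) <<span_mx (nth [::] X k)>>)%MS in hV hr.
have hr' : (\rank V <= \rank (V *m (g - 1%:M)) + r)%N.
  by apply: leq_trans hr _; rewrite leq_add2l size_take_min geq_minl.
have [Hc _] := core hW0 hWl hmono hu hl1 hV hr'.
apply: leq_trans Hc.
have sub : (span_mx (flatten X) <= V)%MS.
  apply: span_subP => x /flattenP [b bX xb].
  apply: submx_trans (span_mem xb) _.
  have lt : (index b X < size X)%N by rewrite index_mem.
  apply: (sumsmx_sup (Ordinal lt)) => //; rewrite genmxE /= nth_index //.
apply: leq_trans (mxrankS sub).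
have e1 : \rank (span_mx (flatten bs)) = size (flatten bs) by apply/eqP.
have s2 : (span_mx (flatten bs) <= span_mx (flatten X) + span_mx (flatten Y))%MS.
  apply: span_subP => x xb.
  have : x \in flatten bs'.
    by rewrite (perm_mem (perm_flatten pb)).
  rewrite -(cat_take_drop r bs') flatten_cat mem_cat -/X -/Y => /orP[xX|xY].
    exact: submx_trans (span_mem xX) (addsmxSl _ _).
  exact: submx_trans (span_mem xY) (addsmxSr _ _).
have e2 : size (flatten bs) = (size (flatten X) + size (flatten Y))%N.
  by rewrite -size_cat -flatten_cat cat_take_drop (perm_size (perm_flatten pb)).
have := mxrankS s2; have := mxrank_adds_leqif (span_mx (flatten X)) (span_mx (flatten Y)).
move=> [le _]; have := rank_leq_row (span_mx (flatten Y)).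
rewrite e1 e2 => a b; have c := leq_trans b le.
rewrite -(leq_add2r (size (flatten Y))); apply: leq_trans c _; by rewrite leq_add2l.
Qed.
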